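(* Let $\mathbb{X},\mathbb{Y}$ be $n$-dimensional real polyhedral Banach spaces with $|\mathrm{Ext}\,B_{\mathbb{X}^*}|=|\mathrm{Ext}\,B_{\mathbb{Y}^*}|$, and let $T\in\mathbb{L}(\mathbb{X},\mathbb{Y})$ be a bijective operator that preserves parallel pairs (equivalently, TEA pairs). Then: (i) for each $f\in\mathrm{Ext}\,B_{\mathbb{X}^*}$ there exists a unique $g\in\mathrm{Ext}\,B_{\mathbb{Y}^*}$ such that $T(\mathrm{Sm}(f))=\mathrm{Sm}(g)$; (ii) for each non-zero $x\in\mathbb{X}$, $|\mathrm{Ext}\,J(x)|=|\mathrm{Ext}\,J(Tx)|$.
   Context: A finite-dimensional Banach space is polyhedral if its unit ball has finitely many extreme points. For non-zero $x$, $J(x)=\{f\in S_{\mathbb{X}^*}: f(x)=\|x\|\}$ and $\mathrm{Ext}\,J(x)$ denotes its set of extreme points. For $f\in\mathrm{Ext}\,B_{\mathbb{X}^*}$, $\mathrm{Sm}(f)=\{x\in\mathbb{X}: J(x)=\{f\}\}$. $(x,y)$ is a parallel pair if $\|x+\lambda y\|=\|x\|+\|y\|$ for some $\lambda$ with $|\lambda|=1$; a TEA pair if $\|x+y\|=\|x\|+\|y\|$. $T$ preserves parallel pairs if $(x,y)$ parallel in $\mathbb{X}$ implies $(Tx,Ty)$ parallel in $\mathbb{Y}$. *)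

(* Defs.v *)
(* finite-dimensional real normed spaces modelled as
   ('rV[R]_n, N) with N a norm; dual functionals as row vectors via the
   standard pairing. *)
From HB Require Import structures.
From mathcomp Require Import all_boot all_order all_algebra.
From mathcomp Require Import all_classical all_reals.
Set Implicit Arguments. Unset Strict Implicit. Unset Printing Implicit Defensive.
Import Order.TTheory GRing.Theory Num.Theory.
Local Open Scope classical_set_scope.
Local Open Scope ring_scope.

Section Defs.
Variable R : realType.

Definition pairing n (f x : 'rV[R]_n) : R := \sum_(i < n) f 0 i * x 0 i.

Definition is_norm n (N : 'rV[R]_n -> R) : Prop :=
  [/\ forall x, N x = 0 -> x = 0,
      forall (a : R) x, N (a *: x) = `|a| * N x
    & forall x y, N (x + y) <= N x + N y].

Definition dual_norm n (N : 'rV[R]_n -> R) (f : 'rV[R]_n) : R :=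
  sup [set `|pairing f x| | x in [set x | N x <= 1]].

Definition extreme (V : lmodType R) (C : set V) : set V :=
  [set x | C x /\ forall (y z : V) (t : R), C y -> C z -> 0 < t < 1 ->
             x = t *: y + (1 - t) *: z -> y = z].

Definition unit_ball n (N : 'rV[R]_n -> R) : set 'rV[R]_n := [set x | N x <= 1].
Definition dual_ball n (N : 'rV[R]_n -> R) : set 'rV[R]_n :=
  [set f | dual_norm N f <= 1].
Definition dual_sphere n (N : 'rV[R]_n -> R) : set 'rV[R]_n :=
  [set f | dual_norm N f = 1].

Definition ExtDual n (N : 'rV[R]_n -> R) := extreme (dual_ball N).

Definition Jset n (N : 'rV[R]_n -> R) (x : 'rV[R]_n) : set 'rV[R]_n :=
  [set f | dual_sphere N f /\ pairing f x = N x].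

Definition Sm n (N : 'rV[R]_n -> R) (f : 'rV[R]_n) : set 'rV[R]_n :=
  [set x | Jset N x = [set f]].

Definition polyhedral n (N : 'rV[R]_n -> R) : Prop :=
  finite_set (extreme (unit_ball N)).

Definition parallel n (N : 'rV[R]_n -> R) (x y : 'rV[R]_n) : Prop :=
  exists l : R, `|l| = 1 /\ N (x + l *: y) = N x + N y.

End Defs.

(* Main.v *)
Require Import Defs.
From HB Require Import structures.
From mathcomp Require Import all_boot all_order all_algebra.
From mathcomp Require Import all_classical all_reals.
From mathcomp Require Import topology normedtype derive.
From mathcomp Require Import ring lra.
From mathcomp Require finmap.
Import Order.TTheory GRing.Theory Num.Theory.
Import numFieldTopology.Exports numFieldNormedType.Exports.
Local Open Scope classical_set_scope.
Local Open Scope card_scope.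
Local Open Scope ring_scope.
Set Implicit Arguments. Unset Strict Implicit. Unset Printing Implicit Defensive.

Section Pairing.
Variables (R : realType) (n : nat).
Implicit Types (f g x y : 'rV[R]_n).

Lemma pairingDr f x y : pairing f (x + y) = pairing f x + pairing f y.
Proof. by rewrite /pairing -big_split /=; apply: eq_bigr => i _; rewrite mxE mulrDr. Qed.
Lemma pairingZr f (a : R) x : pairing f (a *: x) = a * pairing f x.
Proof. by rewrite /pairing mulr_sumr; apply: eq_bigr => i _; rewrite mxE mulrCA. Qed.
Lemma pairingDl f g x : pairing (f + g) x = pairing f x + pairing g x.
Proof. by rewrite /pairing -big_split /=; apply: eq_bigr => i _; rewrite mxE mulrDl. Qed.
Lemma pairingZl f (a : R) x : pairing (a *: f) x = a * pairing f x.
Proof. by rewrite /pairing mulr_sumr; apply: eq_bigr => i _; rewrite mxE mulrA. Qed.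
Lemma pairingNr f x : pairing f (- x) = - pairing f x.
Proof. by rewrite -scaleN1r pairingZr mulN1r. Qed.
Lemma pairingNl f x : pairing (- f) x = - pairing f x.
Proof. by rewrite -scaleN1r pairingZl mulN1r. Qed.
Lemma pairingBr f x y : pairing f (x - y) = pairing f x - pairing f y.
Proof. by rewrite pairingDr pairingNr. Qed.
Lemma pairingBl f g x : pairing (f - g) x = pairing f x - pairing g x.
Proof. by rewrite pairingDl pairingNl. Qed.
Lemma pairing0r f : pairing f 0 = 0.
Proof. by rewrite -(scale0r 0) pairingZr mul0r. Qed.
Lemma pairing0l x : pairing 0 x = 0.
Proof. by rewrite -(scale0r 0) pairingZl mul0r. Qed.
Lemma pairing_deltar f (i : 'I_n) : pairing f (delta_mx 0 i) = f 0 i.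
Proof.
rewrite /pairing (bigD1 i) //= mxE !eqxx mulr1 big1 ?addr0 // => k kNi.
by rewrite mxE (negPf kNi) andbF mulr0.
Qed.
Lemma pairing_deltal (i : 'I_n) x : pairing (delta_mx 0 i) x = x 0 i.
Proof.
rewrite /pairing (bigD1 i) //= mxE !eqxx mul1r big1 ?addr0 // => k kNi.
by rewrite mxE (negPf kNi) andbF mul0r.
Qed.
Lemma pairing_combr f (t : R) x y :
  pairing f (t *: x + (1 - t) *: y) = t * pairing f x + (1 - t) * pairing f y.
Proof. by rewrite pairingDr !pairingZr. Qed.
Lemma pairing_combl (t : R) f g x :
  pairing (t *: f + (1 - t) *: g) x = t * pairing f x + (1 - t) * pairing g x.
Proof. by rewrite pairingDl !pairingZl. Qed.

Lemma row_decomp x : x = \sum_(i < n) x 0 i *: delta_mx 0 i.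
Proof.
apply/rowP => j; rewrite summxE (bigD1 j) //= !mxE !eqxx mulr1 big1 ?addr0 //.
move=> k kj; have kj' : j != k by rewrite eq_sym.
by rewrite !mxE (negPf kj') andbF mulr0.
Qed.

Definition sqd x y : R := \sum_(i < n) (x 0 i - y 0 i) ^+ 2.

Lemma sqd_ge0 x y : 0 <= sqd x y.
Proof. by apply: sumr_ge0 => i _; rewrite sqr_ge0. Qed.

Lemma sqd_eq0 x y : sqd x y = 0 -> x = y.
Proof.
move=> /psumr_eq0P H; apply/rowP => j; apply/eqP; rewrite -subr_eq0 -sqrf_eq0.
by apply/eqP/H => // i _; rewrite sqr_ge0.
Qed.

Lemma sqd_xx x : sqd x x = 0.
Proof. by rewrite /sqd big1 // => i _; rewrite subrr expr0n. Qed.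

Lemma sqd_comb (t : R) a b c :
  sqd (t *: a + (1 - t) *: b) c =
  t * sqd a c + (1 - t) * sqd b c - t * (1 - t) * sqd a b.
Proof.
rewrite /sqd !mulr_sumr -!big_split -sumrN -big_split /=; apply: eq_bigr => i _.
rewrite !mxE; ring.
Qed.

End Pairing.
Section Topo.
Variables (R : realType) (n : nat).
Implicit Types (f g x y : 'rV[R]_n).

Lemma cont_sum (T : topologicalType) (I : Type) (s : seq I) (F : I -> T -> R) :
  (forall i, continuous (F i)) -> continuous (fun t => \sum_(i <- s) F i t).
Proof.
move=> HF; elim: s => [|a s IH].
  by under eq_fun do rewrite big_nil; exact: cst_continuous.
under eq_fun do rewrite big_cons.
move=> y; have -> : (fun t => F a t + \sum_(i <- s) F i t) = F a \+ (fun t => \sum_(i <- s) F i t) by [].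
by apply: continuousD; [exact: HF | exact: IH].
Qed.

Lemma cont_sum_ord (T : topologicalType) (F : 'I_n -> T -> R) :
  (forall i, continuous (F i)) -> continuous (fun t => \sum_(i < n) F i t).
Proof. move=> H; exact: cont_sum. Qed.

Lemma cont_pairl x : continuous (fun f : 'rV[R]_n => pairing f x).
Proof.
apply: (@cont_sum _ _ (index_enum _) (fun i (f : 'rV[R]_n) => f 0 i * x 0 i)) => i f.
have -> : (fun f : 'rV[R]_n => f 0 i * x 0 i) = (fun f : 'rV[R]_n => f 0 i) \* (fun=> x 0 i) by [].
by apply: continuousM; [exact: coord_continuous | exact: cst_continuous].
Qed.

Lemma cont_pairr f : continuous (fun x : 'rV[R]_n => pairing f x).
Proof.
apply: (@cont_sum _ _ (index_enum _) (fun i (x : 'rV[R]_n) => f 0 i * x 0 i)) => i x.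
have -> : (fun x : 'rV[R]_n => f 0 i * x 0 i) = (fun=> f 0 i) \* (fun x : 'rV[R]_n => x 0 i) by [].
by apply: continuousM; [exact: cst_continuous | exact: coord_continuous].
Qed.

Lemma cont_sqd c : continuous (fun y : 'rV[R]_n => sqd y c).
Proof.
apply: (@cont_sum _ _ (index_enum _) (fun i (y : 'rV[R]_n) => (y 0 i - c 0 i) ^+ 2)) => i.
set h := (fun y : 'rV[R]_n => y 0 i - c 0 i).
have hc : continuous h.
  move=> z; have -> : h = (fun y : 'rV[R]_n => y 0 i) \- (fun=> c 0 i) by [].
  by apply: continuousB; [exact: coord_continuous| exact: cst_continuous].
have -> : (fun y : 'rV[R]_n => (y 0 i - c 0 i) ^+ 2) = h \* h.
  by apply: funext => y; rewrite /= expr2.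
by move=> z; apply: continuousM; apply: hc.
Qed.

Lemma compact_box (A : set 'rV[R]_n) (M : R) :
  closed A -> (forall v, A v -> forall i, `|v 0 i| <= M) -> compact A.
Proof.
move=> Acl AM.
have Mnco : compact [set v : 'rV[R]_n | forall i, `[(- M), M]%classic (v ord0 i)].
  by apply: (@rV_compact _ _ (fun=> `[(- M), M]%classic)) => _; exact: segment_compact.
apply: subclosed_compact Acl Mnco _ => v /AM vM i /=.
by rewrite in_itv /= -ler_norml; exact: vM.
Qed.

Lemma closed_le_fun (h : 'rV[R]_n -> R) (c : R) :
  continuous h -> closed [set y | h y <= c].
Proof.
move=> hc; have -> : [set y | h y <= c] = h @^-1` [set r | r <= c] by [].
by apply: preimage_closed; [move=> y _; exact: hc | exact: closed_le].
Qed.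

Lemma closed_eq_fun (h : 'rV[R]_n -> R) (c : R) :
  continuous h -> closed [set y | h y = c].
Proof.
move=> hc; have -> : [set y | h y = c] = h @^-1` [set r | r = c] by [].
by apply: preimage_closed; [move=> y _; exact: hc | exact: closed_eq].
Qed.

End Topo.
Section Extreme.
Variables (R : realType) (n : nat).

Lemma far_ext (K : set 'rV[R]_n) (c : 'rV[R]_n) : compact K -> K !=set0 ->
  exists e, [/\ K e, extreme K e & forall y, K y -> sqd y c <= sqd e c].
Proof.
move=> cK K0.
have [e eK He] := EVT_max_rV K0 cK (continuous_subspaceT (@cont_sqd _ _ c)).
have Ke : K e by rewrite inE in eK.
exists e; split => //; last by move=> y Ky; apply: He; rewrite inE.
split => // a b t Ka Kb /andP[t0 t1] ee.
have Ha : sqd a c <= sqd e c by apply: He; rewrite inE.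
have Hb : sqd b c <= sqd e c by apply: He; rewrite inE.
move: Ha Hb; rewrite ee sqd_comb => Ha Hb.
have D0 := sqd_ge0 a b.
set A := sqd a c in Ha Hb; set B := sqd b c in Ha Hb; set D := sqd a b in Ha Hb D0 *.
have H1 : t * (1 - t) * D <= 0 by nra.
have tt : 0 < t * (1 - t) by rewrite mulr_gt0 // subr_gt0.
have : D <= 0 by rewrite -(pmulr_rle0 _ tt).
by move=> D'; apply: sqd_eq0; apply/le_anti; rewrite D' D0.
Qed.

Definition affine_fun (phi : 'rV[R]_n -> R) :=
  forall t a b, phi (t *: a + (1 - t) *: b) = t * phi a + (1 - t) * phi b.

Lemma face_ext (K : set 'rV[R]_n) (phi : 'rV[R]_n -> R) M e :
  affine_fun phi -> (forall y, K y -> phi y <= M) ->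
  extreme (K `&` [set y | phi y = M]) e -> extreme K e.
Proof.
move=> lin KM [[Ke pe] He]; split => // a b t Ka Kb t01 ee.
have pa := KM _ Ka; have pb := KM _ Kb.
move: pe => /= ; rewrite ee lin => pe.
case/andP: t01 => t0 t1.
apply: (He a b t) => //; [split => //=; apply/le_anti; rewrite pa /=; nra
  | split => //=; apply/le_anti; rewrite pb /=; nra | by apply/andP].
Qed.

Lemma ext_max (K : set 'rV[R]_n) (phi : 'rV[R]_n -> R) :
  compact K -> K !=set0 -> continuous phi -> affine_fun phi ->
  exists e, extreme K e /\ forall y, K y -> phi y <= phi e.
Proof.
move=> cK K0 pc lin.
have [y0 y0K Hy0] := EVT_max_rV K0 cK (continuous_subspaceT pc).
have Ky0 : K y0 by rewrite inE in y0K.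
have KM : forall y, K y -> phi y <= phi y0 by move=> y Ky; apply: Hy0; rewrite inE.
have cF : compact (K `&` [set y | phi y = phi y0]).
  by apply: compact_closedI => //; apply: closed_eq_fun.
have [e [[Ke pe] He _]] := far_ext 0 cF (ex_intro _ y0 (conj Ky0 erefl)).
exists e; split; first exact: face_ext lin KM He.
by rewrite pe.
Qed.

Lemma extreme_sub (A B : set 'rV[R]_n) x : A `<=` B -> A x -> extreme B x -> extreme A x.
Proof. by move=> AB Ax [Bx H]; split => // y z t Ay Az; apply: H; apply: AB. Qed.

End Extreme.
Section Norm.
Variables (R : realType) (n : nat) (N : 'rV[R]_n -> R).
Hypothesis HN : is_norm N.
Implicit Types (f g x y z : 'rV[R]_n).

Lemma N_def x : N x = 0 -> x = 0. Proof. by case: HN => H _ _; apply: H. Qed.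
Lemma NZ (a : R) x : N (a *: x) = `|a| * N x. Proof. by case: HN => _ H _; apply: H. Qed.
Lemma ND x y : N (x + y) <= N x + N y. Proof. by case: HN => _ _ H; apply: H. Qed.
Lemma N0 : N 0 = 0. Proof. by rewrite -(scale0r (0 : 'rV[R]_n)) NZ normr0 mul0r. Qed.
Lemma NN x : N (- x) = N x. Proof. by rewrite -scaleN1r NZ normrN normr1 mul1r. Qed.
Lemma N_ge0 x : 0 <= N x.
Proof. have := ND x (- x); rewrite subrr N0 NN; lra. Qed.
Lemma N_gt0 x : x != 0 -> 0 < N x.
Proof.
move=> x0; rewrite lt_neqAle N_ge0 andbT; apply/eqP => /esym /N_def.
by apply/eqP.
Qed.
Lemma NB x y : N (x - y) = N (y - x). Proof. by rewrite -NN opprB. Qed.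
Lemma N_sum (I : Type) (s : seq I) (F : I -> 'rV[R]_n) :
  N (\sum_(i <- s) F i) <= \sum_(i <- s) N (F i).
Proof.
elim: s => [|a s IH]; first by rewrite !big_nil N0.
by rewrite !big_cons (le_trans (ND _ _)) // lerD2l.
Qed.
Lemma N_coord x : N x <= \sum_(i < n) `|x 0 i| * N (delta_mx 0 i).
Proof.
rewrite {1}(row_decomp x); apply: le_trans (N_sum _ _) _.
by apply: ler_sum => i _; rewrite NZ.
Qed.
Lemma N_lip x y : `|N x - N y| <= N (x - y).
Proof.
rewrite ler_norml; apply/andP; split.
  have := ND (x - y) (y - x); rewrite addrA subrK subrr N0 -NB.
  have := ND x (y - x); rewrite addrC subrK; lra.
have := ND (x - y) y; rewrite subrK; lra.
Qed.

Lemma cont_N : continuous N.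
Proof.
move=> z A /(nbhs_ballP (N z)) [e e0 eA].
set M := \sum_(i < n) N (delta_mx 0 i).
have M0 : 0 <= M by apply: sumr_ge0 => i _; apply: N_ge0.
have M1 : 0 < M + 1 by lra.
apply/nbhs_ballP; exists (e / (M + 1)); first by apply: divr_gt0.
move=> y [_ yz]; apply: eA.
have H : forall i, `|z 0 i - y 0 i| <= e / (M + 1) by move=> i; apply: ltW; exact: (yz 0 i).
change (`|N z - N y| < e).
apply: le_lt_trans (N_lip _ _) _; apply: le_lt_trans (N_coord _) _.
apply: (@le_lt_trans _ _ (\sum_(i < n) e / (M + 1) * N (delta_mx 0 i))).
  by apply: ler_sum => i _; rewrite !mxE; apply: ler_wpM2r; [apply: N_ge0| apply: H].
rewrite -mulr_sumr -/M mulrAC ltr_pdivrMr // ltr_pM2l //; lra.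
Qed.

End Norm.
Section Norm2.
Variables (R : realType) (n : nat) (N : 'rV[R]_n -> R).
Hypothesis HN : is_norm N.
Hypothesis n0 : (0 < n)%N.
Implicit Types (f g x y z : 'rV[R]_n).

Let i0 : 'I_n := Ordinal n0.

Lemma coord_le_sum y i : `|y 0 i| <= \sum_(j < n) `|y 0 j|.
Proof. by rewrite (bigD1 i) //= lerDl sumr_ge0. Qed.

Lemma coord_bound : exists C, 0 < C /\ forall y i, `|y 0 i| <= C * N y.
Proof.
pose s := fun y : 'rV[R]_n => \sum_(j < n) `|y 0 j|.
have sc : continuous s.
  apply: (@cont_sum_ord R n _ (fun j (y : 'rV[R]_n) => `|y 0 j|)) => j y.
  have -> : (fun y : 'rV[R]_n => `|y 0 j|) = (fun r : R => `|r|) \o (fun y : 'rV[R]_n => y 0 j) by [].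
  by apply: continuous_comp; [exact: coord_continuous | exact: norm_continuous].
pose S := [set y | s y = 1].
have cS : compact S.
  apply: (@compact_box _ _ _ 1); first exact: closed_eq_fun.
  by move=> v /= <-; apply: coord_le_sum.
have S0 : S !=set0.
  exists (delta_mx 0 i0); rewrite /S /s /= (bigD1 i0) //= big1 ?addr0.
    by rewrite mxE !eqxx normr1.
  by move=> k ki; rewrite mxE (negPf ki) andbF normr0.
have [m mS Hm] := EVT_min_rV S0 cS (continuous_subspaceT (@cont_N _ _ _ HN)).
have Sm : s m = 1 by rewrite inE in mS.
have s0 : s 0 = 0 by rewrite /s big1 // => j _; rewrite mxE normr0.
have m0 : m != 0 by apply/eqP => m0; move: Sm; rewrite m0 s0 => /eqP; rewrite eq_sym oner_eq0.
have Nm := N_gt0 HN m0.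
exists (N m)^-1; split; first by rewrite invr_gt0.
move=> y i; have sy0 : 0 <= s y by apply: sumr_ge0.
have yi := coord_le_sum y i.
have [sy|] := eqVneq (s y) 0.
  have : `|y 0 i| <= 0 by move: yi; rewrite -/(s y) sy.
  move=> H; apply: le_trans H _; apply: mulr_ge0; [by rewrite invr_ge0 ltW| exact: N_ge0].
move=> sy; have sy1 : 0 < s y by rewrite lt_neqAle eq_sym sy.
have wS : S ((s y)^-1 *: y).
  rewrite /S /s /= -[X in _ = X](mulVf sy) mulr_sumr; apply: eq_bigr => j _.
  by rewrite mxE normrM gtr0_norm // invr_gt0.
have := Hm _ (mem_set wS); rewrite NZ // gtr0_norm ?invr_gt0 // => H.
have H2 : s y * N m <= N y.
  have := ler_wpM2l (ltW sy1) H; rewrite mulrA mulfV ?mul1r //.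
rewrite mulrC ler_pdivlMr //; apply: le_trans H2.
by apply: ler_wpM2r => //; apply: ltW.
Qed.

End Norm2.
Section Dual.
Variables (R : realType) (n : nat) (N : 'rV[R]_n -> R).
Hypothesis HN : is_norm N.
Hypothesis n0 : (0 < n)%N.
Implicit Types (f g x y z : 'rV[R]_n).

Definition dom f := forall y, pairing f y <= N y.

Lemma pair_bound f : exists K, forall x, `|pairing f x| <= K * N x.
Proof.
have [C [C0 HC]] := coord_bound HN n0.
exists (\sum_(i < n) `|f 0 i| * C) => x.
rewrite /pairing mulr_suml; apply: le_trans (ler_norm_sum _ _ _) _.
apply: ler_sum => i _; rewrite normrM -mulrA ler_wpM2l //.
Qed.

Lemma has_sup_d f : has_sup [set `|pairing f x| | x in [set x | N x <= 1]].
Proof.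
have [K HK] := pair_bound f.
split; first by exists `|pairing f 0|; exists 0 => //=; rewrite N0.
exists (`|K|) => r [x /= Nx <-]; apply: le_trans (HK x) _.
apply: le_trans (ler_wpM2r (N_ge0 HN x) (ler_norm K)) _.
by rewrite ler_piMr.
Qed.

Lemma dn_ub f x : N x <= 1 -> `|pairing f x| <= dual_norm N f.
Proof. by move=> Nx; apply: sup_upper_bound (has_sup_d f) _ _; exists x. Qed.

Lemma dn_ge0 f : 0 <= dual_norm N f.
Proof. by have := dn_ub f (x := 0); rewrite pairing0r normr0 N0 //; apply. Qed.

Lemma pair_le_dn f y : pairing f y <= dual_norm N f * N y.
Proof.
have [->|y0] := eqVneq y 0; first by rewrite pairing0r N0 // mulr0.
have Ny := N_gt0 HN y0.
have w1 : N ((N y)^-1 *: y) <= 1.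
  by rewrite NZ // gtr0_norm ?invr_gt0 // mulVf // lt0r_neq0.
have := dn_ub f w1; rewrite pairingZr normrM gtr0_norm ?invr_gt0 // => H.
have := ler_wpM2r (ltW Ny) H; rewrite mulrAC mulVf ?lt0r_neq0 // mul1r => H'.
exact: le_trans (ler_norm _) H'.
Qed.

Lemma domP f : dom f <-> dual_norm N f <= 1.
Proof.
split => [H|H y].
  apply: ge_sup; first by exists `|pairing f 0|; exists 0 => //=; rewrite N0.
  move=> r [x /= Nx <-]; rewrite ler_norml; apply/andP; split.
    by rewrite lerNl -pairingNr (le_trans (H _)) // NN.
  exact: le_trans (H _) Nx.
apply: le_trans (pair_le_dn f y) _.
by rewrite ler_piMl // N_ge0.
Qed.

Lemma dom_abs f y : dom f -> `|pairing f y| <= N y.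
Proof.
move=> H; rewrite ler_norml (H y) andbT lerNl -pairingNr (le_trans (H _)) //.
by rewrite NN.
Qed.

Lemma dn_opp f : dual_norm N (- f) = dual_norm N f.
Proof.
rewrite /dual_norm; congr sup; apply/seteqP; split => r [x Hx <-]; exists x => //.
  by rewrite pairingNl normrN.
by rewrite pairingNl normrN.
Qed.

Lemma dn0 : dual_norm N 0 = 0.
Proof.
rewrite /dual_norm (_ : [set _ | _ in _] = [set 0]) ?sup1 //.
apply/seteqP; split => r.
  by move=> [x _ <-]; rewrite pairing0l normr0.
by move=> /= ->; exists 0 => //=; [rewrite N0 | rewrite pairing0l normr0].
Qed.

Lemma dual_ballE : dual_ball N = [set f | dom f].
Proof. by apply/seteqP; split => f /= /domP. Qed.

Lemma JsetE x : x != 0 -> Jset N x = [set f | dom f /\ pairing f x = N x].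
Proof.
move=> x0; have Nx := N_gt0 HN x0.
apply/seteqP; split => f /=.
  by move=> [/= H1 H2]; split => //; apply/domP; rewrite /dual_sphere /= in H1; rewrite H1.
move=> [H1 H2]; split => //; rewrite /dual_sphere /=.
apply/le_anti; rewrite (proj1 (domP f) H1) /=.
have w1 : N ((N x)^-1 *: x) <= 1.
  by rewrite NZ // gtr0_norm ?invr_gt0 // mulVf // lt0r_neq0.
by have := dn_ub f w1; rewrite pairingZr H2 mulVf ?lt0r_neq0 // normr1.
Qed.

Lemma dom0 : dom 0.
Proof. by move=> y; rewrite pairing0l N_ge0. Qed.

Lemma dom_opp f : dom f -> dom (- f).
Proof. by move=> H y; rewrite pairingNl -pairingNr (le_trans (H _)) // NN. Qed.

Lemma DB_compact : compact [set f | dom f].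
Proof.
apply: (@compact_box _ _ _ (\sum_(j < n) N (delta_mx 0 j))).
  have -> : [set f | dom f] = \bigcap_(y in setT) [set f | pairing f y <= N y].
    by apply/seteqP; split => [f H y _ | f H y]; [exact: H | exact: (H y I)].
  by apply: closed_bigI => y _; apply: closed_le_fun; apply: cont_pairl.
move=> f Hf i; rewrite -pairing_deltar; apply: le_trans (dom_abs _ Hf) _.
by rewrite (bigD1 i) //= lerDl sumr_ge0 // => j _; apply: N_ge0.
Qed.

End Dual.
Section HB.
Variables (R : realType) (n : nat) (N : 'rV[R]_n -> R).
Hypothesis HN : is_norm N.
Variables (x : 'rV[R]_n) (j : 'I_n).
Hypothesis xj : x 0 j != 0.
Implicit Types (f g y z w : 'rV[R]_n).

Definition Wk (k : nat) y := forall i : 'I_n, (k <= i)%N -> i != j -> y 0 i = y 0 j / x 0 j * x 0 i.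

Lemma WkD k y z : Wk k y -> Wk k z -> Wk k (y + z).
Proof. by move=> Hy Hz i ki ij; rewrite !mxE Hy // Hz // mulrDl mulrDl. Qed.

Lemma WkZ k (a : R) y : Wk k y -> Wk k (a *: y).
Proof. by move=> Hy i ki ij; rewrite !mxE Hy // !mulrA. Qed.

Lemma Wk0 k : Wk k 0.
Proof. by move=> i _ _; rewrite !mxE mul0r mul0r. Qed.

Lemma Wkx k : Wk k x.
Proof. by move=> i _ _; rewrite mulfV // mul1r. Qed.

Lemma Wk_n y : Wk n y.
Proof. by move=> i; rewrite leqNgt ltn_ord. Qed.

Lemma Wk0_mul y : Wk 0 y -> y = (y 0 j / x 0 j) *: x.
Proof.
move=> H; apply/rowP => i; rewrite mxE.
have [->|ij] := eqVneq i j; first by rewrite mulfVK.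
exact: H.
Qed.

Lemma HB_base : exists f, (forall y, Wk 0 y -> pairing f y <= N y) /\ pairing f x = N x.
Proof.
exists ((N x / x 0 j) *: delta_mx 0 j); split; last first.
  by rewrite pairingZl pairing_deltal mulfVK.
move=> y Hy; rewrite pairingZl pairing_deltal {2}(Wk0_mul Hy) (NZ HN).
have -> : N x / x 0 j * y 0 j = y 0 j / x 0 j * N x by ring.
apply: ler_wpM2r; first exact: N_ge0.
exact: ler_norm.
Qed.

Lemma HB_step k : (k < n)%N -> forall i0 : 'I_n, nat_of_ord i0 = k ->
  (exists f, (forall y, Wk k y -> pairing f y <= N y) /\ pairing f x = N x) ->
  (exists f, (forall y, Wk k.+1 y -> pairing f y <= N y) /\ pairing f x = N x).
Proof.
move=> kn i0 i0k [f [Hf fx]].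
have [i0j|i0j] := eqVneq i0 j.
  exists f; split => // y Hy; apply: Hf => i ki ij.
  move: ki; rewrite leq_eqVlt => /orP[/eqP ki|ki]; last exact: Hy.
  have ii0 : i = i0 by apply/val_inj; rewrite /= i0k ki.
  by rewrite ii0 i0j eqxx in ij.
have ji0 : j != i0 by rewrite eq_sym.
pose e : 'rV[R]_n := delta_mx 0 i0.
pose d : 'rV[R]_n := delta_mx 0 i0 - (x 0 i0 / x 0 j) *: delta_mx 0 j.
have dE y : pairing d y = y 0 i0 - x 0 i0 / x 0 j * y 0 j.
  by rewrite pairingBl pairingZl !pairing_deltal.
have dW w : Wk k w -> pairing d w = 0.
  by move=> Hw; rewrite dE Hw ?i0k //; apply/eqP; rewrite subr_eq0; apply/eqP; ring.
have dx : pairing d x = 0 by apply: dW; apply: Wkx.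
have de : pairing d e = 1.
  by rewrite dE /e !mxE (negPf ji0) !eqxx andbF mulr0 subr0.
have Wstep y : Wk k.+1 y -> Wk k (y - pairing d y *: e).
  move=> Hy i ki ij.
  rewrite !mxE (negPf ji0) andbF mulr0 subr0 eqxx /=.
  move: ki; rewrite leq_eqVlt => /orP[/eqP ki|ki].
    have -> : i = i0 by apply/val_inj; rewrite /= i0k ki.
    rewrite eqxx mulr1 dE; ring.
  have ii0 : i != i0.
    by apply/eqP => ii; move: ki; rewrite ii i0k ltnn.
  by rewrite (negPf ii0) mulr0 subr0; apply: Hy.
pose A := [set pairing f w - N (w - e) | w in Wk k].
have Aub w2 : Wk k w2 -> ubound A (N (w2 + e) - pairing f w2).
  move=> Hw2 r [w1 Hw1 <-].
  have h1 := Hf _ (WkD Hw1 Hw2); rewrite pairingDr in h1.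
  have h2 := ND HN (w1 - e) (w2 + e).
  have h3 : w1 - e + (w2 + e) = w1 + w2 by rewrite addrACA addNr addr0.
  rewrite h3 in h2; lra.
have A0 : A !=set0 by exists (pairing f 0 - N (0 - e)); exists 0 => //; apply: Wk0.
have hA : has_sup A by split => //; exists (N (0 + e) - pairing f 0); apply: Aub; apply: Wk0.
pose c := sup A.
have c_low w : Wk k w -> pairing f w - N (w - e) <= c.
  by move=> Hw; apply: sup_upper_bound hA _ _; exists w.
have c_up w : Wk k w -> c <= N (w + e) - pairing f w.
  by move=> Hw; apply: ge_sup => //; apply: Aub.
exists (f + (c - pairing f e) *: d); split; last first.
  by rewrite pairingDl pairingZl dx mulr0 addr0.
move=> y Hy; set t := pairing d y; set w := y - t *: e.
have Hw : Wk k w by apply: Wstep.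
have yE : y = w + t *: e by rewrite /w subrK.
have -> : pairing (f + (c - pairing f e) *: d) y = pairing f w + t * c.
  by rewrite pairingDl pairingZl -/t {1}yE pairingDr pairingZr; ring.
rewrite yE.
have [t0|t0|t0] := ltgtP t 0.
- have Hw' := c_low _ (WkZ (- t)^-1 Hw).
  have s0 : 0 < - t by rewrite oppr_gt0.
  have key : - t * N ((- t)^-1 *: w - e) = N (w + t *: e).
    rewrite -[in LHS](gtr0_norm s0) -NZ // (gtr0_norm s0); congr N.
    by rewrite scalerBr scalerA divff ?lt0r_neq0 // scale1r scaleNr opprK.
  have E : - t * pairing f ((- t)^-1 *: w) = pairing f w.
    by rewrite pairingZr mulrA divff ?lt0r_neq0 // mul1r.
  have := ler_wpM2l (ltW s0) Hw'; rewrite mulrBr E key => H; nra.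
- have Hw' := c_up _ (WkZ t^-1 Hw).
  have key : t * N (t^-1 *: w + e) = N (w + t *: e).
    rewrite -[in LHS](gtr0_norm t0) -NZ // (gtr0_norm t0); congr N.
    by rewrite scalerDr scalerA divff ?lt0r_neq0 // scale1r.
  have E : t * pairing f (t^-1 *: w) = pairing f w.
    by rewrite pairingZr mulrA divff ?lt0r_neq0 // mul1r.
  have := ler_wpM2l (ltW t0) Hw'; rewrite mulrBr E key => H; nra.
- by rewrite t0 scale0r addr0 mul0r addr0; apply: Hf.
Qed.

End HB.

Lemma HahnBanach (R : realType) (n : nat) (N : 'rV[R]_n -> R) :
  is_norm N -> forall x : 'rV[R]_n, exists f, dom N f /\ pairing f x = N x.
Proof.
move=> HN x.
have [->|x0] := eqVneq x 0.
  by exists 0; split; [apply: dom0 | rewrite pairing0l N0].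
have [j xj] : exists j, x 0 j != 0.
  apply/existsP; apply: contraNT x0 => /existsPn H; apply/eqP/rowP => k.
  by rewrite mxE; apply/eqP; move: (H k); rewrite negbK.
have main : forall k, (k <= n)%N ->
  exists f, (forall y, Wk x j k y -> pairing f y <= N y) /\ pairing f x = N x.
  elim => [_|k IH kn]; first exact: HB_base.
  by apply: (@HB_step _ _ _ HN _ _ xj k kn (Ordinal kn) erefl); apply: IH; apply: ltnW.
have [f [Hf fx]] := main n (leqnn n).
by exists f; split => // y; apply: Hf; apply: Wk_n.
Qed.
Lemma eps_seq (R : realType) (T : eqType) (s : seq T) (P : T -> Prop) (a b : T -> R) :
  (forall v, v \in s -> P v -> 0 < b v) ->
  exists eps : R, 0 < eps /\ forall v, v \in s -> P v -> eps * `|a v| <= b v.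
Proof.
elim: s => [|u s IH] H; first by exists 1; split => // v; rewrite in_nil.
have [e [e0 He]] : exists eps : R, 0 < eps /\ forall v, v \in s -> P v -> eps * `|a v| <= b v.
  by apply: IH => v vs Pv; apply: H => //; rewrite in_cons vs orbT.
have [Pu|nPu] := pselect (P u); last first.
  exists e; split => // v; rewrite in_cons => /orP[/eqP ->|vs] Pv //; exact: He.
have bu : 0 < b u by apply: H => //; rewrite in_cons eqxx.
pose e' := Num.min e (b u / (`|a u| + 1)).
have m1 : e' <= e by rewrite /e' ge_min lexx.
have m2 : e' <= b u / (`|a u| + 1) by rewrite /e' ge_min lexx orbT.
have au : 0 < `|a u| + 1 by rewrite ltr_wpDl.
have e'0 : 0 < e' by rewrite lt_min e0 divr_gt0.
exists e'; split => // v; rewrite in_cons => /orP[/eqP ->|vs] Pv.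
  apply: le_trans (ler_wpM2r (normr_ge0 _) m2) _.
  rewrite mulrAC ler_pdivrMr //; apply: ler_wpM2l; [exact: ltW | lra].
apply: le_trans (He _ vs Pv).
exact: (ler_wpM2r (normr_ge0 _) m1).
Qed.
Section Poly.
Variables (R : realType) (n : nat) (N : 'rV[R]_n -> R).
Hypothesis HN : is_norm N.
Hypothesis n0 : (0 < n)%N.
Implicit Types (f g h k x y z v : 'rV[R]_n).

Let DB := [set f | dom N f].

Lemma ExtDualE : ExtDual N = extreme DB.
Proof. by rewrite /ExtDual dual_ballE. Qed.

Lemma E_dom g : ExtDual N g -> dom N g.
Proof. by rewrite ExtDualE => -[]. Qed.

Lemma F1 x : exists g, ExtDual N g /\ pairing g x = N x.
Proof.
have [f0 [df0 f0x]] := HahnBanach HN x.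
have DB0 : DB !=set0 by exists f0.
have [e [eE He]] := @ext_max _ _ DB (fun f => pairing f x) (DB_compact HN) DB0
  (@cont_pairl _ _ x) (fun t a b => pairing_combl t a b x).
exists e; rewrite ExtDualE; split => //.
apply/le_anti; rewrite (proj1 eE) /= -f0x; exact: He.
Qed.

Lemma E_opp g : ExtDual N g -> ExtDual N (- g).
Proof.
rewrite !ExtDualE => -[dg Hg]; split; first exact: dom_opp.
move=> a b t Da Db t01 e; apply: oppr_inj; apply: (Hg (- a) (- b) t) => //.
- exact: dom_opp.
- exact: dom_opp.
- by rewrite -[g]opprK e opprD -!scalerN.
Qed.

Lemma half_comb (f h : 'rV[R]_n) (e : R) :
  f = 2^-1 *: (f + e *: h) + (1 - 2^-1) *: (f - e *: h).
Proof. by apply/rowP => i; rewrite !mxE; field. Qed.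

Lemma E_ne0 g : ExtDual N g -> g != 0.
Proof.
move=> Eg; apply/eqP => g0; move: Eg; rewrite g0 ExtDualE => -[_ H].
pose i0 : 'I_n := Ordinal n0.
have x0 : delta_mx 0 i0 != 0 :> 'rV[R]_n.
  by apply/eqP => /rowP /(_ i0); rewrite !mxE !eqxx /= => /eqP; rewrite oner_eq0.
have [h [Eh hx]] := F1 (delta_mx 0 i0).
have hx0 := N_gt0 HN x0.
have hh : h = - h.
  apply: (H h (- h) (2^-1)) => //; first exact: E_dom.
  - exact/dom_opp/E_dom.
  - by apply/andP; split; lra.
  - by apply/rowP => i; rewrite !mxE; field.
have hx' : - pairing h (delta_mx 0 i0) = N (delta_mx 0 i0) by rewrite -pairingNl -hh.
move: hx hx' hx0; clear; lra.
Qed.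

Lemma ball_compact : compact (unit_ball N).
Proof.
have [C [C0 HC]] := coord_bound HN n0.
apply: (@compact_box _ _ _ C); first exact/closed_le_fun/cont_N.
by move=> y /= Ny i; apply: le_trans (HC y i) _; rewrite ler_piMr // ltW.
Qed.

Lemma V_le1 v : extreme (unit_ball N) v -> N v <= 1.
Proof. by case. Qed.

Lemma V_opp v : extreme (unit_ball N) v -> extreme (unit_ball N) (- v).
Proof.
move=> [Bv Hv]; split; first by rewrite /unit_ball /= NN.
move=> a b t Ba Bb t01 e; apply: oppr_inj; apply: (Hv (- a) (- b) t) => //.
- by rewrite /unit_ball /= NN.
- by rewrite /unit_ball /= NN.
- by rewrite -[v]opprK e opprD -!scalerN.
Qed.

Lemma dom_of_V k : (forall v, extreme (unit_ball N) v -> `|pairing k v| <= 1) -> dom N k.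
Proof.
move=> Hk.
have B0 : unit_ball N !=set0 by exists 0; rewrite /unit_ball /= N0.
have [e [eV He]] := @ext_max _ _ (unit_ball N) (fun y => pairing k y) ball_compact B0
  (@cont_pairr _ _ k) (fun t a b => pairing_combr k t a b).
have ke : pairing k e <= 1 by apply: le_trans (ler_norm _) (Hk _ eV).
move=> y; have [->|y0] := eqVneq y 0; first by rewrite pairing0r N0.
have Ny := N_gt0 HN y0.
have w1 : unit_ball N ((N y)^-1 *: y).
  by rewrite /unit_ball /= NZ // gtr0_norm ?invr_gt0 // mulVf // lt0r_neq0.
have := le_trans (He _ w1) ke; rewrite pairingZr => H.
by have := ler_wpM2l (ltW Ny) H; rewrite mulrA mulfV ?lt0r_neq0 // mul1r mulr1.
Qed.

Hypothesis HP : polyhedral N.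

Lemma key f g : ExtDual N f -> dom N g ->
  (forall v, extreme (unit_ball N) v -> pairing f v = 1 -> pairing g v = 1) -> g = f.
Proof.
move=> Ef dg Hfg.
have [s sE] := proj1 (finite_seqP _) HP.
have Vs v : extreme (unit_ball N) v -> v \in s by rewrite sE.
have df := E_dom Ef.
have fle v : extreme (unit_ball N) v -> `|pairing f v| <= 1.
  by move=> Vv; apply: le_trans (dom_abs HN v df) (V_le1 Vv).
pose h := g - f.
have hv0 v : extreme (unit_ball N) v -> `|pairing f v| = 1 -> pairing h v = 0.
  move=> Vv; case: (lerP 0 (pairing f v)) => [f0|f0].
    by rewrite ger0_norm // => fv; rewrite pairingBl fv Hfg // subrr.
  rewrite ltr0_norm // => fv.
  have fv' : pairing f (- v) = 1 by rewrite pairingNr.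
  have := Hfg _ (V_opp Vv) fv'; rewrite pairingNr => gv.
  rewrite pairingBl; lra.
have [e [e0 He]] := @eps_seq _ _ s (fun v => `|pairing f v| < 1) (fun v => pairing h v)
  (fun v => 1 - `|pairing f v|) (fun v _ fv => ltac:(by rewrite subr_gt0)).
have dk (sg : R) : `|sg| = 1 -> dom N (f + (sg * e) *: h).
  move=> sg1; apply: dom_of_V => v Vv; rewrite pairingDl pairingZl.
  have [fv1|fv1] := eqVneq `|pairing f v| 1.
    by rewrite (hv0 _ Vv fv1) mulr0 addr0 fv1.
  have fv : `|pairing f v| < 1 by rewrite lt_neqAle fv1 fle.
  apply: le_trans (ler_normD _ _) _; rewrite normrM normrM sg1 mul1r (gtr0_norm e0).
  have := He _ (Vs _ Vv) fv; lra.
have Hext := Ef; rewrite ExtDualE in Hext; case: Hext => _ Hext.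
have eq : f + (1 * e) *: h = f + (-1 * e) *: h.
  apply: (Hext _ _ (2^-1) (dk 1 (normr1 _)) (dk (-1) (normrN1 _))).
  - by apply/andP; split; lra.
  - by apply/rowP => i; rewrite !mxE; field.
apply/rowP => i; have /rowP /(_ i) := eq; rewrite !mxE => Hi.
have : e * (g 0 i - f 0 i) = 0 by lra.
by move/eqP; rewrite mulf_eq0 (gt_eqF e0) /= subr_eq0 => /eqP.
Qed.

Lemma E_finite : finite_set (ExtDual N).
Proof.
have [s sE] := proj1 (finite_seqP _) HP.
pose m := size s.
pose pat (f : 'rV[R]_n) : {ffun 'I_m -> bool} := [ffun i : 'I_m => pairing f (nth 0 s i) == 1].
have inj f g : ExtDual N f -> ExtDual N g -> pat f = pat g -> g = f.
  move=> Ef Eg pfg; apply: (key Ef (E_dom Eg)) => v Vv fv.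
  have vs : v \in s by have : [set` s] v by rewrite -sE.
  have im : (index v s < m)%N by rewrite index_mem.
  have := congr1 (fun p : {ffun 'I_m -> bool} => p (Ordinal im)) pfg; rewrite !ffunE /= nth_index // fv eqxx.
  by move=> /esym /eqP.
pose es := [seq xget 0 [set g | ExtDual N g /\ pat g = b] | b <- enum {ffun 'I_m -> bool}].
apply: (sub_finite_set _ (finite_seq es)) => f Ef.
have Hx := @xgetI _ 0 [set g | ExtDual N g /\ pat g = pat f] f (conj Ef erefl).
case: Hx => Ex px.
have <- : xget 0 [set g | ExtDual N g /\ pat g = pat f] = f by apply: inj.
by apply/mapP; exists (pat f); rewrite ?mem_enum.
Qed.

Lemma pairing_sumr (f : 'rV[R]_n) (A : seq 'rV[R]_n) :
  pairing f (\sum_(v <- A) v) = \sum_(v <- A) pairing f v.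
Proof.
elim: A => [|a A IH]; first by rewrite !big_nil pairing0r.
by rewrite !big_cons pairingDr IH.
Qed.

Definition sm f x := forall g, ExtDual N g -> (pairing g x = N x <-> g = f).

Lemma Sm_ne f : ExtDual N f -> exists x, sm f x.
Proof.
move=> Ef; have [s sE] := proj1 (finite_seqP _) HP.
have df := E_dom Ef.
pose A := [seq v <- s | pairing f v == 1].
have AV v : v \in A -> extreme (unit_ball N) v.
  by rewrite mem_filter => /andP[_ vs]; rewrite sE.
have gA g : dom N g -> forall v, v \in A -> pairing g v <= 1.
  by move=> dg v vA; apply: le_trans (dg v) (V_le1 (AV _ vA)).
exists (\sum_(v <- A) v).
have fx : pairing f (\sum_(v <- A) v) = \sum_(v <- A) 1.
  rewrite pairing_sumr big_seq_cond [RHS]big_seq_cond; apply: eq_bigr => v.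
  by rewrite andbT mem_filter => /andP[/eqP].
have Nx : N (\sum_(v <- A) v) = \sum_(v <- A) 1.
  apply/le_anti; apply/andP; split; last by rewrite -fx; apply: df.
  have [g0 [Eg0 g0x]] := F1 (\sum_(v <- A) v).
  rewrite -g0x pairing_sumr big_seq [X in _ <= X]big_seq; apply: ler_sum => v vA.
  exact: gA (E_dom Eg0) v vA.
move=> g Eg; split => [gx|->]; last by rewrite fx Nx.
apply: (key Ef (E_dom Eg)) => v Vv fv.
have vA : v \in A by rewrite mem_filter fv eqxx /=; have : [set` s] v by rewrite -sE.
have H : \sum_(w <- A) (1 - pairing g w) = 0.
  by rewrite sumrB -pairing_sumr gx Nx subrr.
have H' : \sum_(w <- A | w \in A) (1 - pairing g w) = 0 by rewrite -big_seq.
have nn : forall w, w \in A -> 0 <= 1 - pairing g w.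
  by move=> w wA; rewrite subr_ge0; apply: gA (E_dom Eg) w wA.
have := @psumr_eq0 _ _ A (fun w => w \in A) (fun w => 1 - pairing g w) nn.
rewrite H' eqxx => /esym /allP /(_ v vA); rewrite vA /= => /eqP; lra.
Qed.

End Poly.
Section Smooth.
Variables (R : realType) (n : nat) (N : 'rV[R]_n -> R).
Hypothesis HN : is_norm N.
Hypothesis n0 : (0 < n)%N.
Hypothesis HP : polyhedral N.
Implicit Types (f g h k x y z u v : 'rV[R]_n).

Notation E := (ExtDual N).
Notation sm := (sm N).
Let Edom g : E g -> dom N g := @E_dom _ _ _ HN n0 g.

Lemma sm_at f x : E f -> sm f x -> pairing f x = N x.
Proof. by move=> Ef H; apply/(H f Ef). Qed.

Lemma sm_uniq f g x : E f -> E g -> sm f x -> sm g x -> f = g.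
Proof. by move=> Ef Eg Hf Hg; symmetry; apply/(Hf g Eg); apply: sm_at. Qed.

Lemma sm_ne0 f x : E f -> sm f x -> x != 0.
Proof.
move=> Ef H; apply/eqP => x0.
have Ef' := E_opp HN n0 Ef.
have : - f = f by apply/(H _ Ef'); rewrite x0 pairing0r N0.
move=> /eqP; rewrite -subr_eq0 -opprD oppr_eq0 -mulr2n -scaler_nat scaler_eq0.
rewrite pnatr_eq0 /= => /eqP f0.
by have := E_ne0 HN n0 Ef; rewrite f0 eqxx.
Qed.

Let DB := [set f | dom N f].

Lemma D_compact x : compact (DB `&` [set f | pairing f x = N x]).
Proof. by apply: compact_closedI; [apply: DB_compact | apply/closed_eq_fun/cont_pairl]. Qed.

Lemma extD x e : extreme (DB `&` [set f | pairing f x = N x]) e -> E e /\ pairing e x = N x.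
Proof.
move=> He; split; last by case: He => -[].
rewrite (ExtDualE HN n0); apply: (face_ext (fun t a b => pairing_combl t a b x) _ He).
by move=> y; apply.
Qed.

Lemma SmE f : E f -> Sm N f = [set x | sm f x].
Proof.
move=> Ef; apply/seteqP; split => x /=.
  rewrite /Sm /= => JE.
  have Jf : Jset N x f by rewrite JE.
  have x0 : x != 0.
    apply/eqP => x0; move: Jf; rewrite x0 => -[ds _].
    have : Jset N 0 (- f).
      by split; [rewrite /dual_sphere /= dn_opp | rewrite pairing0r N0].
    rewrite -x0 JE /= => /eqP; rewrite -subr_eq0 -opprD oppr_eq0 -mulr2n -scaler_nat scaler_eq0.
    rewrite pnatr_eq0 /= => /eqP f0.
    by move: ds; rewrite /dual_sphere /= f0 dn0 // => /eqP; rewrite eq_sym oner_eq0.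
  move: Jf; rewrite (JsetE HN n0 x0) => -[_ fx] g Eg; split => [gx|->//].
  have : Jset N x g by rewrite (JsetE HN n0 x0); split => //; apply: E_dom.
  by rewrite JE.
move=> H; have x0 := sm_ne0 Ef H.
rewrite /Sm /= (JsetE HN n0 x0).
have fD : (DB `&` [set f | pairing f x = N x]) f by split; [apply: E_dom | apply: sm_at].
apply/seteqP; split => h /=; last by move=> ->; exact: fD.
move=> hD.
have [e [eD eext He]] := far_ext f (@D_compact x) (ex_intro _ f fD).
have [Ee ex] := extD eext.
have ef : e = f by apply/(H e Ee).
have := He h hD; rewrite ef sqd_xx => hf.
by apply: sqd_eq0; apply/le_anti; rewrite hf sqd_ge0.
Qed.

Lemma extJ x : x != 0 -> extreme (Jset N x) = [set g | E g /\ pairing g x = N x].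
Proof.
move=> x0; rewrite (JsetE HN n0 x0).
have -> : [set f | dom N f /\ pairing f x = N x] = DB `&` [set f | pairing f x = N x] by [].
apply/seteqP; split => g; first exact: extD.
move=> [Eg gx]; apply: (@extreme_sub _ _ _ DB).
- by move=> y [].
- by split => //; apply: E_dom.
- by rewrite -(ExtDualE HN n0).
Qed.

Lemma sm_push g z y (t : R) : E g -> pairing g z = N z -> sm g y -> 0 < t ->
  sm g (z + t *: y).
Proof.
move=> Eg gz Hy t0.
have dg := Edom Eg.
have gy := sm_at Eg Hy.
have gzy : pairing g (z + t *: y) = N z + t * N y by rewrite pairingDr pairingZr gz gy.
have Nzy : N (z + t *: y) = N z + t * N y.
  apply/le_anti/andP; split; last by rewrite -gzy; apply: dg.
  by apply: le_trans (ND HN _ _) _; rewrite (NZ HN) gtr0_norm.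
move=> h Eh; split => [hzy|->]; last by rewrite gzy Nzy.
have dh := Edom Eh.
have hz := dh z; have hy := dh y.
have : pairing h y = N y.
  move: hzy; rewrite Nzy pairingDr pairingZr => hzy; apply/le_anti; rewrite hy /=; nra.
by move/(Hy h Eh).
Qed.

Lemma sm_open f x u : E f -> sm f x -> exists t : R, 0 < t /\ sm f (x + t *: u).
Proof.
move=> Ef Hx.
have [s sE] := proj1 (finite_seqP _) (E_finite HN n0 HP).
have fx := sm_at Ef Hx.
have Hb : forall g, g \in s -> g <> f -> 0 < pairing f x - pairing g x.
  move=> g gs gf; have Eg : E g by rewrite sE.
  rewrite subr_gt0 fx lt_neqAle (Edom Eg x) andbT; apply/eqP => gx.
  by apply: gf; apply/(Hx g Eg).
have [e [e0 He]] := @eps_seq _ _ s (fun g => g <> f) (fun g => pairing g u - pairing f u)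
  (fun g => pairing f x - pairing g x) Hb.
have t0 : 0 < e / 2 by rewrite divr_gt0.
have lt g : E g -> g <> f -> pairing g (x + e / 2 *: u) < pairing f (x + e / 2 *: u).
  move=> Eg gf; have gs : g \in s by have : [set` s] g by rewrite -sE.
  have := He g gs gf; rewrite !pairingDr !pairingZr => H.
  have gx : pairing g x < pairing f x.
    rewrite fx lt_neqAle (Edom Eg x) andbT; apply/eqP => gx.
    by apply: gf; apply/(Hx g Eg).
  have := ler_norm (pairing g u - pairing f u).
  have := normr_ge0 (pairing g u - pairing f u); nra.
exists (e / 2); split => //.
have fN : pairing f (x + e / 2 *: u) = N (x + e / 2 *: u).
  have [g0 [Eg0 g0x]] := F1 HN n0 (x + e / 2 *: u).
  have [g0f'|g0f] := pselect (g0 = f); first by rewrite -g0f'.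
  have := lt g0 Eg0 g0f; rewrite g0x => H.
  by have := Edom Ef (x + e / 2 *: u); lra.
move=> g Eg; split => [gx|->//].
apply: contrapT => gf; have := lt g Eg gf; rewrite gx -fN ltxx.
by [].
Qed.

Lemma parallel_ext a b : parallel N a b ->
  exists g (l : R), [/\ E g, `|l| = 1, pairing g a = N a & pairing g (l *: b) = N b].
Proof.
move=> [l [l1 Nab]].
have [g [Eg gab]] := F1 HN n0 (a + l *: b).
exists g, l; split => //.
  have := Edom Eg a; have := Edom Eg (l *: b); rewrite (NZ HN) l1 mul1r.
  by rewrite pairingDr in gab; lra.
have := Edom Eg a; have := Edom Eg (l *: b); rewrite (NZ HN) l1 mul1r.
by rewrite pairingDr in gab; lra.
Qed.

Lemma sm_parallel f p q : E f -> sm f p -> sm f q -> parallel N p q.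
Proof.
move=> Ef Hp Hq; exists 1; split; first by rewrite normr1.
rewrite scale1r; apply/le_anti; rewrite ND //=.
by rewrite -(sm_at Ef Hp) -(sm_at Ef Hq) -pairingDr; apply: Edom.
Qed.

Lemma sm_pos f p q (a b : R) : E f -> sm f p -> sm f q -> 0 < a -> 0 < b ->
  sm f (a *: p + b *: q).
Proof.
move=> Ef Hp Hq a0 b0.
have fp := sm_at Ef Hp; have fq := sm_at Ef Hq.
have fpq : pairing f (a *: p + b *: q) = a * N p + b * N q.
  by rewrite pairingDr !pairingZr fp fq.
have Npq : N (a *: p + b *: q) = a * N p + b * N q.
  apply/le_anti/andP; split; last by rewrite -fpq; apply: Edom.
  by apply: le_trans (ND HN _ _) _; rewrite !(NZ HN) !gtr0_norm.
move=> h Eh; split => [hpq|->]; last by rewrite fpq Npq.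
have hp := Edom Eh p; have hq := Edom Eh q.
have : pairing h p = N p.
  move: hpq; rewrite Npq pairingDr !pairingZr => hpq; apply/le_anti; rewrite hp /=; nra.
by move/(Hp h Eh).
Qed.

End Smooth.
Lemma lim_ge (R : realType) (a b c d : R) :
  (forall t, 0 < t -> c - t * d <= a + t * b) -> c <= a.
Proof.
move=> H; rewrite leNgt; apply/negP => ac.
pose K := `|b| + `|d| + 1.
have K0 : 0 < K by rewrite /K; have := normr_ge0 b; have := normr_ge0 d; lra.
pose t := (c - a) / (2 * K).
have t0 : 0 < t by rewrite divr_gt0 // ?subr_gt0 // mulr_gt0.
have Ht := H t t0.
have tb : t * b <= t * `|b| := ler_wpM2l (ltW t0) (ler_norm b).
have td : t * d <= t * `|d| := ler_wpM2l (ltW t0) (ler_norm d).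
have tK : t * K = (c - a) / 2.
  by rewrite /t; field; rewrite lt0r_neq0.
have tK' : t * K = t * `|b| + t * `|d| + t by rewrite /K; ring.
move: Ht tb td tK tK' t0 ac; clear; nra.
Qed.

Section CardInj.
Import finmap.
Local Open Scope fset_scope.
Lemma surj_inj_card (X Y : choiceType) (A : set X) (B : set Y) (phi : X -> Y) :
  finite_set A -> finite_set B -> (A #= B)%card ->
  (forall b, B b -> exists a, A a /\ phi a = b) ->
  {in A &, injective phi}.
Proof.
move=> fA fB AB AB2.
have /(fcard_eq fA fB) cAB := AB.
pose sA := fset_set A; pose sB := fset_set B.
have sub : fsubset sB [fset phi a | a in sA].
  apply/fsubsetP => b; rewrite in_fset_set // => /set_mem Bb.
  have [a [Aa <-]] := AB2 b Bb.
  by apply/imfsetP; exists a => //=; rewrite in_fset_set //; apply: mem_set.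
have le1 := fsubset_leq_card sub.
have le2 : (#|` [fset phi a | a in sA]| <= #|` sA|)%N by apply: leq_imfset_card.
have /card_in_imfsetP inj : #|` [fset phi a | a in sA]| == #|` sA|.
  by rewrite eqn_leq le2 /= -/sA -/sB cAB.
move=> a1 a2 A1 A2; apply: inj; rewrite in_fset_set //; apply: mem_set; exact: set_mem.
Qed.
End CardInj.
Section Main.
Variables (R : realType) (n : nat) (NX NY : 'rV[R]_n -> R).
Variable (T : {linear 'rV[R]_n -> 'rV[R]_n}).
Hypotheses (HX : is_norm NX) (HY : is_norm NY) (n0 : (0 < n)%N).
Hypotheses (PX : polyhedral NX) (PY : polyhedral NY).
Hypothesis Hc : (ExtDual NX #= ExtDual NY)%card.
Variables (Ti : 'rV[R]_n -> 'rV[R]_n).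
Hypotheses (TK : cancel T Ti) (TiK : cancel Ti T).
Hypothesis Hpar : forall x y, parallel NX x y -> parallel NY (T x) (T y).
Implicit Types (f g h x y z u v p q : 'rV[R]_n).

Notation EX := (ExtDual NX).
Notation EY := (ExtDual NY).
Notation smX := (sm NX).
Notation smY := (sm NY).

Lemma Tlin x (t : R) u : T (x + t *: u) = T x + t *: T u.
Proof. by rewrite linearD linearZ. Qed.

Lemma Tneq0 x : x != 0 -> T x != 0.
Proof.
move=> x0; apply/eqP => Tx; move/eqP: x0; apply.
have T0 : Ti 0 = 0 by rewrite -{1}(linear0 T) TK.
by rewrite -(TK x) Tx T0.
Qed.

Lemma sign_l (l : R) : `|l| = 1 -> l = 1 \/ l = -1.
Proof.
case: (lerP 0 l) => l0; first by rewrite ger0_norm // => ->; left.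
by rewrite ltr0_norm // => /eqP; rewrite eqr_oppLR => /eqP ->; right.
Qed.

Lemma par_sign f g p q : EX f -> EY g -> smX f p -> smY g (T p) -> smX f q ->
  exists l : R, `|l| = 1 /\ l * pairing g (T q) = NY (T q).
Proof.
move=> Ef Eg Hp HTp Hq.
have [h [l [Eh l1 hp hq]]] := parallel_ext HY n0 (Hpar (sm_parallel HX n0 Ef Hp Hq)).
have hg : h = g by apply/(HTp h Eh).
by exists l; split => //; rewrite -pairingZr -hg.
Qed.

Lemma step1 f : EX f -> exists g, EY g /\ forall x, smX f x -> smY g (T x).
Proof.
move=> Ef.
have [x0 Hx0] := Sm_ne HX n0 PX Ef.
have [g [Eg gT]] := F1 HY n0 (T x0).
have [yg Hyg] := Sm_ne HY n0 PY Eg.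
have [t [t0 Hp]] := sm_open HX n0 PX (Ti yg) Ef Hx0.
set p := x0 + t *: Ti yg in Hp.
have HTp : smY g (T p) by rewrite /p Tlin TiK; apply: sm_push.
have claim1 q : smX f q -> pairing g (T q) = NY (T q).
  move=> Hq; have [l [l1 Hl]] := par_sign Ef Eg Hp HTp Hq.
  case: (sign_l l1) => lE; first by move: Hl; rewrite lE mul1r.
  move: Hl; rewrite lE mulN1r => Hl.
  have Tq0 := N_gt0 HY (Tneq0 (sm_ne0 HX n0 Ef Hq)).
  have Tp0 := N_gt0 HY (Tneq0 (sm_ne0 HX n0 Ef Hp)).
  have gp := sm_at Eg HTp.
  have Hr := sm_pos HX n0 Ef Hq Hp Tp0 Tq0.
  have [l' [l'1 Hl']] := par_sign Ef Eg Hp HTp Hr.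
  have Tr0 := N_gt0 HY (Tneq0 (sm_ne0 HX n0 Ef Hr)).
  move: Hl'; rewrite linearD !linearZ pairingDr !pairingZr gp.
  have -> : pairing g (T q) = - NY (T q) by rewrite -Hl opprK.
  have E0 : NY (T p) * - NY (T q) + NY (T q) * NY (T p) = 0 by ring.
  rewrite E0 mulr0 => Hl'; move: Tr0; rewrite linearD !linearZ.
  by rewrite -Hl' ltxx.
exists g; split => // q Hq h Eh; split => [hq|->]; last exact: claim1.
have [yh Hyh] := Sm_ne HY n0 PY Eh.
have [s [s0 Hs]] := sm_open HX n0 PX (Ti yh) Ef Hq.
have HTs : smY h (T (q + s *: Ti yh)) by rewrite Tlin TiK; apply: sm_push.
by symmetry; apply/(HTs g Eg); apply: claim1.
Qed.

Variable phi : 'rV[R]_n -> 'rV[R]_n.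
Hypothesis Hphi : forall f, EX f -> EY (phi f) /\ forall x, smX f x -> smY (phi f) (T x).

Lemma pre_phi y g h : EY g -> smY g y -> EX h -> pairing h (Ti y) = NX (Ti y) -> phi h = g.
Proof.
move=> Eg Hy Eh hy.
have [xh Hxh] := Sm_ne HX n0 PX Eh.
have [t [t0 Ht]] := sm_open HY n0 PY (T xh) Eg Hy.
have Hp : smX h (Ti y + t *: xh) by apply: sm_push.
have := (Hphi Eh).2 _ Hp; rewrite Tlin TiK => H.
exact: sm_uniq (Hphi Eh).1 Eg H Ht.
Qed.

Lemma phi_surj g : EY g -> exists h, EX h /\ phi h = g.
Proof.
move=> Eg; have [y Hy] := Sm_ne HY n0 PY Eg.
have [h [Eh hy]] := F1 HX n0 (Ti y).
by exists h; split => //; apply: pre_phi Hy Eh hy.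
Qed.

Lemma phi_inj : {in EX &, injective phi}.
Proof.
apply: surj_inj_card (E_finite HX n0 PX) (E_finite HY n0 PY) Hc _.
exact: phi_surj.
Qed.

Lemma phi_injE f h : EX f -> EX h -> phi f = phi h -> f = h.
Proof. by move=> Ef Eh; apply: phi_inj; apply: mem_set. Qed.

Lemma imE f : EX f -> T @` Sm NX f = Sm NY (phi f).
Proof.
move=> Ef; have [Eg Hg] := Hphi Ef.
rewrite (SmE HX n0 Ef) (SmE HY n0 Eg); apply/seteqP; split => y.
  by move=> [x Hx <-]; apply: Hg.
move=> /= Hy; exists (Ti y); last exact: TiK.
move=> h Eh; split => [hy|->]; first exact: phi_injE (pre_phi Eg Hy Eh hy).
have [h' [Eh' h'y]] := F1 HX n0 (Ti y).
by rewrite (phi_injE Ef Eh' (esym (pre_phi Eg Hy Eh' h'y))).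
Qed.

Lemma card_ii x : x != 0 -> (extreme (Jset NX x) #= extreme (Jset NY (T x)))%card.
Proof.
move=> x0; have Tx0 := Tneq0 x0.
rewrite (extJ HX n0 x0) (extJ HY n0 Tx0).
set AX := [set g | EX g /\ pairing g x = NX x].
have -> : [set g | EY g /\ pairing g (T x) = NY (T x)] = phi @` AX.
  apply/seteqP; split => g.
    move=> [Eg gx]; have [h [Eh hg]] := phi_surj Eg.
    exists h => //; split => //.
    have [y Hy] := Sm_ne HY n0 PY Eg.
    apply/le_anti; rewrite (E_dom HX n0 Eh) /=.
    apply: (@lim_ge _ _ (pairing h (Ti y)) _ (NX (Ti y))) => t t0.
    have Hyt := sm_push HY n0 Eg gx Hy t0.
    have [f [Ef fx]] := F1 HX n0 (Ti (T x + t *: y)).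
    have fh : f = h by apply: phi_injE => //; rewrite hg; apply: pre_phi Hyt Ef fx.
    have TiE : Ti (T x + t *: y) = x + t *: Ti y by rewrite -{1}(TiK y) -Tlin TK.
    move: fx; rewrite fh TiE pairingDr pairingZr => ->.
    have := ND HX x (t *: Ti y); have := ND HX (x + t *: Ti y) (- (t *: Ti y)).
    rewrite addrK NN // (NZ HX) gtr0_norm //; lra.
  move=> [f [Ef fx] <-]; have [Eg Hg] := Hphi Ef; split => //.
  have [xf Hxf] := Sm_ne HX n0 PX Ef.
  apply/le_anti; rewrite (E_dom HY n0 Eg) /=.
  apply: (@lim_ge _ _ (pairing (phi f) (T xf)) _ (NY (T xf))) => t t0.
  have := Hg _ (sm_push HX n0 Ef fx Hxf t0); rewrite Tlin => H.
  rewrite -pairingZr -pairingDr (sm_at Eg H).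
  have := ND HY (T x + t *: T xf) (- (t *: T xf)).
  rewrite addrK NN // (NZ HY) gtr0_norm //; lra.
apply: card_esym; apply: inj_card_eq => a b /set_mem [Ea _] /set_mem [Eb _].
exact: phi_injE.
Qed.

End Main.
Theorem mainTheorem17 (R : realType) (n : nat) (NX NY : 'rV[R]_n -> R)
    (T : {linear 'rV[R]_n -> 'rV[R]_n}) :
  is_norm NX -> is_norm NY ->
  polyhedral NX -> polyhedral NY ->
  (ExtDual NX #= ExtDual NY)%card ->
  bijective T ->
  (forall x y, parallel NX x y -> parallel NY (T x) (T y)) ->
  (forall f, ExtDual NX f ->
     exists! g, ExtDual NY g /\ T @` Sm NX f = Sm NY g) /\
  (forall x, x != 0 -> (extreme (Jset NX x) #= extreme (Jset NY (T x)))%card).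
Proof.
move=> HX HY PX PY Hc [Ti TK TiK] Hpar.
case: (posnP n) => [n0e | n0].
  subst n.
  have Sm0 (N : 'rV[R]_0 -> R) f : is_norm N -> Sm N f = set0.
    move=> HN; apply/seteqP; split => x //= Hx.
    have : Jset N x f by rewrite Hx.
    move=> [ds _]; move: ds; rewrite /dual_sphere /= (thinmx0 f) (dn0 HN).
    by move=> /eqP; rewrite eq_sym oner_eq0.
  split => [f Ef|x]; last by rewrite (thinmx0 x) eqxx.
  exists 0; split; last by move=> g' _; rewrite (thinmx0 g').
  split; last by rewrite !Sm0 // image_set0.
  split; first by rewrite /dual_ball /= (dn0 HY) ler01.
  by move=> y z t _ _ _ _; rewrite (thinmx0 y) (thinmx0 z).
have [phi Hphi] : {phi : 'rV[R]_n -> 'rV[R]_n & forall f, ExtDual NX f ->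
    ExtDual NY (phi f) /\ forall x, sm NX f x -> sm NY (phi f) (T x)}.
  apply: (@choice _ _ (fun f g => ExtDual NX f ->
    ExtDual NY g /\ forall x, sm NX f x -> sm NY g (T x))) => f; case: (pselect (ExtDual NX f)) => Ef.
    by have [g Hg] := step1 HX HY n0 PX PY TK TiK Hpar Ef; exists g.
  by exists 0.
split; last by move=> x x0; apply: (card_ii HX HY n0 PX PY Hc TK TiK Hphi x0).
move=> f Ef; exists (phi f); split.
  by split; [exact: (Hphi f Ef).1 | exact: (imE HX HY n0 PX PY Hc TiK Hphi Ef)].
move=> g [Eg Hg].
have [xf Hxf] := Sm_ne HX n0 PX Ef.
have Eg' := (Hphi f Ef).1.
have H1 : Sm NY g (T xf).
  by rewrite -Hg; exists xf => //; rewrite (SmE HX n0 Ef).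
rewrite (SmE HY n0 Eg) in H1.
exact: sm_uniq Eg' Eg ((Hphi f Ef).2 _ Hxf) H1.
Qed.
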